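(* Let $K$ be a $W$-set for a continuous flow on a compact manifold $M$ which is not global, and let $\mathcal{W}$ be its witness region. Then $L:=M\setminus\mathcal{W}$ is nonempty and is the maximal compact invariant set contained in $M\setminus K$; consequently $L$ is an isolated invariant set. Moreover, $K\cup L$ is a global $W$-set.
   Context: For a continuous flow, $\omega(x)$ and $\omega^*(x)$ denote the $\omega$- and $\alpha$-limit sets of $x$. A compact invariant set is isolated if it is the maximal invariant subset of some compact neighbourhood of itself. Let $K$ be a compact invariant set. A point $x$ is witnessed by $K$ if its trajectory meets every neighbourhood of $K$ (equivalently $(\omega(x)\cup\omega^*(x))\cap K\neq\emptyset$). $K$ is a $W$-set if it has a neighbourhood all of whose points are witnessed by $K$; its witness region $\mathcal{W}(K)$ is the set of all points witnessed by $K$; $K$ is global if $\mathcal{W}(K)=M$. *)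

(* Defs.v *)
From HB Require Import structures.
From mathcomp Require Import all_boot all_order all_algebra.
From mathcomp Require Import all_classical all_reals all_analysis.
Set Implicit Arguments. Unset Strict Implicit. Unset Printing Implicit Defensive.
Import Order.TTheory GRing.Theory Num.Theory.
Import numFieldNormedType.Exports.
Local Open Scope classical_set_scope.
Local Open Scope ring_scope.

Section Defs.
Variable R : realType.

Definition is_topological_manifold (M : topologicalType) : Prop :=
  hausdorff_space M /\
  exists n : nat, forall x : M,
    exists (U : set M) (V : set 'rV[R]_n) (f : M -> 'rV[R]_n) (g : 'rV[R]_n -> M),
      [/\ open U, U x, open V, f @` U `<=` V & g @` V `<=` U] /\
      [/\ {within U, continuous f}, {within V, continuous g},
          {in U, cancel f g} & {in V, cancel g f}].

Variable M : topologicalType.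

Definition is_flow (phi : R -> M -> M) : Prop :=
  [/\ continuous (fun p : R * M => phi p.1 p.2),
      forall x, phi 0 x = x &
      forall s t x, phi (s + t) x = phi s (phi t x)].

Variable phi : R -> M -> M.

Definition flow_invariant (S : set M) : Prop :=
  forall t x, S x -> S (phi t x).

Definition nbhd_of (K U : set M) : Prop := K `<=` interior U.

Definition witnessed (K : set M) (x : M) : Prop :=
  forall U, nbhd_of K U -> exists t : R, U (phi t x).

Definition witness_region (K : set M) : set M := [set x | witnessed K x].

Definition W_set (K : set M) : Prop :=
  [/\ compact K, flow_invariant K &
      exists U, nbhd_of K U /\ (forall x, U x -> witnessed K x)].

Definition global_set (K : set M) : Prop := witness_region K = setT.

Definition isolated_invariant (K : set M) : Prop :=
  [/\ compact K, flow_invariant K &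
      exists N, [/\ compact N, nbhd_of K N &
                    forall S, flow_invariant S -> S `<=` N -> S `<=` K]].

End Defs.

(* Main.v *)
Require Import Defs.
From HB Require Import structures.
From mathcomp Require Import all_boot all_order all_algebra.
From mathcomp Require Import all_classical all_reals all_analysis.
Import Order.TTheory GRing.Theory Num.Theory.
Import numFieldNormedType.Exports.
Local Open Scope classical_set_scope.
Local Open Scope ring_scope.

Theorem corollary7p2 (R : realType) (M : topologicalType) (phi : R -> M -> M)
  (K : set M) :
  is_topological_manifold R M -> compact [set: M] -> is_flow phi ->
  W_set phi K -> ~ global_set phi K ->
  let L := ~` witness_region phi K in
  [/\ L !=set0,
      [/\ compact L, flow_invariant phi L, L `<=` ~` K &
          forall S : set M, compact S -> flow_invariant phi S -> S `<=` ~` K -> S `<=` L],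
      isolated_invariant phi L,
      W_set phi (K `|` L) &
      global_set phi (K `|` L)].
Proof.
move=> [hM _] cT [cont phi0 phiD] [cK iK [U0 [nU0 hU0]]] ng L.
have ct t : continuous (phi t).
  move=> x.
  have h : (fun y => (t, y)) @ x --> (t, x).
    exact: (cvg_pair (cvg_cst t) cvg_id).
  exact: (continuous_comp h (cont (t, x))).
have wsh x s : witnessed phi K (phi s x) -> witnessed phi K x.
  move=> w U nU; have [t Ut] := w U nU; exists (t + s); by rewrite phiD.
have wsh' x s : witnessed phi K x -> witnessed phi K (phi s x).
  move=> w U nU; have [t Ut] := w U nU; exists (t - s).
  by rewrite -phiD subrK.
have oW : open (witness_region phi K).
  rewrite openE => x wx.
  have nI : nbhd_of K U0° by move=> y /nU0; rewrite (proj1 (interior_id _) (open_interior _)).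
  have [t Ut] := wx _ nI.
  have : nbhs x (phi t @^-1` U0) by exact: ct.
  by apply: filterS => y /hU0 /wsh.
have clL : closed L by exact: open_closedC.
have KW : K `<=` witness_region phi K by move=> x /nU0 /interior_subset /hU0.
have Linv : flow_invariant phi L by move=> t x Lx /wsh; exact: Lx.
have Lmax : forall S : set M, compact S -> flow_invariant phi S -> S `<=` ~` K -> S `<=` L.
  move=> S cS iS SK x Sx wx.
  have oV : open (~` S) by apply: closed_openC; exact: compact_closed.
  have nV : nbhd_of K (~` S) by move=> y Ky; rewrite (proj1 (interior_id _) oV) => Sy; exact: SK Sy Ky.
  by have [t Vt] := wx _ nV; apply: Vt; exact: iS.
have gKL : global_set phi (K `|` L).
  apply/seteqP; split => // x _.
  have [wx|nwx] := pselect (witnessed phi K x).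
    by move=> U nU; apply: wx => y Ky; apply: nU; left.
  move=> U nU; exists 0; rewrite phi0; apply: interior_subset; apply: nU; by right.
split.
- apply: contrapT => H; apply: ng; apply/seteqP; split => // x _.
  by apply: contrapT => wx; apply: H; exists x.
- split => //; first exact: (subclosed_compact clL cT).
  by move=> x Lx Kx; apply: Lx; exact: KW.
- split => //; first exact: (subclosed_compact clL cT).
  have nrm := compact_normal hM cT.
  have clK : closed K by exact: compact_closed.
  have sW : set_nbhs K (witness_region phi K).
    move=> x Kx; apply: open_nbhs_nbhs; split => //; exact: KW.
  have [C sC clC] := nrm K clK _ sW.
  exists (~` C°); split.
  + apply: (subclosed_compact _ cT) => //; apply: open_closedC; exact: open_interior.
  + move=> x Lx.
    have : nbhs x (~` closure C).
      apply: open_nbhs_nbhs; split; first exact/closed_openC/closed_closure.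
      by move=> /clC.
    apply: filterS => y ncy cy; apply: ncy; apply: subset_closure; exact: interior_subset.
  + move=> S iS SN x Sx wx.
    have nI : nbhd_of K C°.
      by move=> y Ky; rewrite (proj1 (interior_id _) (open_interior _)); exact: sC.
    by have [t Ct] := wx _ nI; apply: (SN _ (iS t x Sx)).
- split.
  + apply: compactU => //; exact: (subclosed_compact clL cT).
  + by move=> t x [Kx|Lx]; [left; exact: iK | right; exact: Linv].
  + exists setT; split; first by move=> x _; rewrite interiorT.
    by move=> x _; rewrite -[witnessed _ _ _]/(witness_region _ _ x) gKL.
- exact: gKL.
Qed.
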